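(* Let $d=d(n)$, and let $X=X(n)\in\mathbb{R}^d$ and $Y=Y(n)\in\mathbb{R}^d$ be sequences of random vectors defined on a common probability space. Let $a_n,b_n$ be sequences of real constants and let $F$ be a continuous cdf. Suppose that for every $x\in\mathbb{R}$ with $0<F(x)<1$: (1) ${\sf Pr}(\max_{i\in[d]}Y_i\le a_n+b_nx)\to F(x)$ as $n\to\infty$; and (2) for every fixed $\varepsilon>0$, $\sum_{i=1}^d{\sf Pr}(|X_i-Y_i|>\varepsilon b_n)=o(1)$. Then ${\sf Pr}(\max_{i\in[d]}X_i\le a_n+b_nx)\to F(x)$ for all $x\in\mathbb{R}$. *)

(* Defs.v *)
From HB Require Import structures.
From mathcomp Require Import all_boot all_order all_algebra.
From mathcomp Require Import all_classical all_reals all_analysis.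
Set Implicit Arguments. Unset Strict Implicit. Unset Printing Implicit Defensive.
Import Order.TTheory GRing.Theory Num.Theory.
Import numFieldNormedType.Exports.
Local Open Scope classical_set_scope.
Local Open Scope ring_scope.

Definition is_cdf (R : realType) (F : R -> R) : Prop :=
  [/\ {homo F : x y / x <= y},
      F @ -oo --> (0 : R),
      F @ +oo --> (1 : R) &
      forall x : R, F x @[x --> x^'+] --> F x].

(* max_{i in [m]} v_i as an extended real (equal to -oo when m = 0). *)
Definition emax (R : realType) (m : nat) (v : 'I_m -> R) : \bar R :=
  \big[Order.max/-oo%E]_(i < m) (v i)%:E.

(* Main.v *)
Require Import Defs.
From HB Require Import structures.
From mathcomp Require Import all_boot all_order all_algebra.
From mathcomp Require Import all_classical all_reals all_analysis.
From mathcomp Require Import ring lra.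
From mathcomp Require Import measurable_realfun.
Import Order.TTheory GRing.Theory Num.Theory.
Import numFieldNormedType.Exports.
Import Num.Def.
Local Open Scope classical_set_scope.
Local Open Scope ring_scope.

Section RealPart.
Variables (R : realType) (F : R -> R).
Hypotheses (hF : is_cdf F) (hFc : continuous F).

Lemma F_mono x y : x <= y -> F x <= F y.
Proof. by case: hF => m _ _ _; apply: m. Qed.

Lemma F_ge0 x : 0 <= F x.
Proof.
case: hF => m h0 _ _; rewrite leNgt; apply/negP => Fx0.
have := cvgr_gt _ h0 _ Fx0; case=> M [_ HM].
have := HM (minr (M - 1) (x - 1)).
have -> : minr (M - 1) (x - 1) < M by rewrite gt_min; apply/orP; left; lra.
move=> /(_ isT); apply/negP; rewrite -leNgt; apply: m.
by rewrite ge_min; apply/orP; right; lra.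
Qed.

Lemma F_le1 x : F x <= 1.
Proof.
case: hF => m _ h1 _; rewrite leNgt; apply/negP => Fx1.
have := cvgr_lt _ h1 _ Fx1; case=> M [_ HM].
have := HM (maxr (M + 1) (x + 1)).
have -> : M < maxr (M + 1) (x + 1) by rewrite lt_max; apply/orP; left; lra.
move=> /(_ isT); apply/negP; rewrite -leNgt; apply: m.
by rewrite le_max; apply/orP; right; lra.
Qed.

Lemma ivt_up x v : F x <= v < 1 -> exists2 y, x <= y & F y = v.
Proof.
case/andP => xv v1; case: hF => m _ h1 _.
have := cvgr_gt _ h1 _ v1; case=> M [_ HM].
pose z := maxr (M + 1) (x + 1).
have Mz : M < z by rewrite lt_max; apply/orP; left; lra.
have xz : x <= z by rewrite le_max; apply/orP; right; lra.
have := HM z Mz => vz.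
have cF : {within `[x, z], continuous F} by apply: continuous_subspaceT.
have hv : minr (F x) (F z) <= v <= maxr (F x) (F z).
  by rewrite ge_min le_max xv (ltW vz) orbT.
have [c cin Fc] := IVT xz cF hv.
by exists c => //; move: cin; rewrite in_itv /= => /andP[].
Qed.

Lemma ivt_lo x v : 0 < v <= F x -> exists2 y, y <= x & F y = v.
Proof.
case/andP => v0 vx; case: hF => m h0 _ _.
have := cvgr_lt _ h0 _ v0; case=> M [_ HM].
pose z := minr (M - 1) (x - 1).
have Mz : z < M by rewrite gt_min; apply/orP; left; lra.
have xz : z <= x by rewrite ge_min; apply/orP; right; lra.
have := HM z Mz => vz.
have cF : {within `[z, x], continuous F} by apply: continuous_subspaceT.
have hv : minr (F z) (F x) <= v <= maxr (F z) (F x).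
  by rewrite ge_min le_max vx (ltW vz) /= orbT.
have [c cin Fc] := IVT xz cF hv.
by exists c => //; move: cin; rewrite in_itv /= => /andP[].
Qed.

Lemma ivt_any v : 0 < v < 1 -> exists y, F y = v.
Proof.
case/andP => v0 v1; case: hF => m h0 _ _.
have := cvgr_lt _ h0 _ v0; case=> M [_ HM].
have := HM (M - 1); rewrite ltrBlDr ltrDl ltr01 => /(_ isT) h.
have hv : F (M - 1) <= v < 1 by rewrite (ltW h) v1.
by have [y _ Fy] := ivt_up _ _ hv; exists y.
Qed.

Lemma cont_right y e : 0 < e -> exists2 d, 0 < d & F (y + d) < F y + e.
Proof.
move=> e0; have /cvgr_dist_lt/(_ e e0) := hFc y.
case/nbhs_ballP => d /= d0 Hd.
exists (d / 2); first by rewrite divr_gt0.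
have : `|F y - F (y + d / 2)| < e.
  apply: Hd; rewrite /ball /= opprD addrA subrr sub0r normrN gtr0_norm ?divr_gt0//.
  by rewrite ltr_pdivrMr // ltr_pMr // ltr1n.
by rewrite ltr_distl => /andP[h _]; lra.
Qed.

Lemma cont_left y e : 0 < e -> exists2 d, 0 < d & F y - e < F (y - d).
Proof.
move=> e0; have /cvgr_dist_lt/(_ e e0) := hFc y.
case/nbhs_ballP => d /= d0 Hd.
exists (d / 2); first by rewrite divr_gt0.
have : `|F y - F (y - d / 2)| < e.
  apply: Hd; rewrite /ball /= (_ : y - (y - d / 2) = d / 2); last by ring.
  rewrite gtr0_norm ?divr_gt0 //; lra.
by rewrite distrC ltr_distl => /andP[].
Qed.


Lemma main_real (G H s : nat -> R -> R) (b : nat -> R)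
 (G01 : forall n x, 0 <= G n x <= 1)
 (Gmono : forall n x y, b n * x <= b n * y -> G n x <= G n y)
 (Hmono : forall n x y, b n * x <= b n * y -> H n x <= H n y)
 (up : forall n x d, G n x <= H n (x + d) + s n d)
 (lo : forall n x d, H n (x - d) <= G n x + s n d)
 (hH : forall x, 0 < F x < 1 -> H ^~ x @ \oo --> F x)
 (hs : forall d, 0 < d -> s ^~ d @ \oo --> 0) :
 forall x, G ^~ x @ \oo --> F x.
Proof.
move=> x.
have [x1 Fx1] := ivt_any (1/3) ltac:(lra).
have [x2 Fx2] := ivt_any (2/3) ltac:(lra).
have x12 : x1 < x2.
  rewrite ltNge; apply/negP => /F_mono; rewrite Fx1 Fx2; lra.
have hb : \forall n \near \oo, 0 < b n.
  have h1 : \forall n \near \oo, H n x1 < 1/2.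
    apply: (cvgr_lt _ (hH x1 _)); rewrite Fx1; lra.
  have h2 : \forall n \near \oo, 1/2 < H n x2.
    apply: (cvgr_gt _ (hH x2 _)); rewrite Fx2; lra.
  near=> n; rewrite ltNge; apply/negP => bn.
  have : H n x2 <= H n x1 by apply: Hmono; nra.
  have hn1 : H n x1 < 1/2 by near: n.
  have hn2 : 1/2 < H n x2 by near: n.
  lra.
apply/cvgrPdist_lt => e e0.
have hup : \forall n \near \oo, G n x < F x + e.
  have [Fbig|Fsmall] := leP (1 - e/2) (F x).
    near=> n; have /andP[_ ?] := G01 n x; lra.
  have [y xy Fy] := ivt_up x (F x + e/4) ltac:(apply/andP; split; lra).
  have [d d0 Fd] := cont_right y (e/4) ltac:(lra).
  have Fyd : 0 < F (y + d) < 1.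
    have := F_mono y (y + d) ltac:(lra); have := F_ge0 x.
    move=> *; apply/andP; split; lra.
  have hH1 : \forall n \near \oo, H n (y + d) < F (y + d) + e/4.
    by apply: (cvgr_lt _ (hH _ Fyd)); lra.
  have hs1 : \forall n \near \oo, s n d < e/8.
    by apply: (cvgr_lt _ (hs d d0)); lra.
  near=> n.
  have bn : 0 < b n by near: n.
  have g1 : G n x <= G n y by apply: Gmono; nra.
  have := up n y d.
  have : H n (y + d) < F (y + d) + e/4 by near: n.
  have : s n d < e/8 by near: n.
  lra.
have hlo : \forall n \near \oo, F x - e < G n x.
  have [Fsm|Fbig] := ltP (F x) (e/2).
    near=> n; have /andP[? _] := G01 n x; lra.
  have [y yx Fy] := ivt_lo x (F x - e/4) ltac:(apply/andP; split; lra).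
  have [d d0 Fd] := cont_left y (e/4) ltac:(lra).
  have Fyd : 0 < F (y - d) < 1.
    have := F_mono (y - d) y ltac:(lra); have := F_le1 x.
    move=> *; apply/andP; split; lra.
  have hH1 : \forall n \near \oo, F (y - d) - e/4 < H n (y - d).
    by apply: (cvgr_gt _ (hH _ Fyd)); lra.
  have hs1 : \forall n \near \oo, s n d < e/8.
    by apply: (cvgr_lt _ (hs d d0)); lra.
  near=> n.
  have bn : 0 < b n by near: n.
  have g1 : G n y <= G n x by apply: Gmono; nra.
  have := lo n y d.
  have : F (y - d) - e/4 < H n (y - d) by near: n.
  have : s n d < e/8 by near: n.
  lra.
near=> n.
have h1 : G n x < F x + e by near: n.
have h2 : F x - e < G n x by near: n.
rewrite distrC ltr_distl; apply/andP; split; lra.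
Unshelve. all: by end_near.
Qed.

End RealPart.
Section Prob.
Variables (R : realType) (dsp : measure_display) (T : measurableType dsp)
  (P : probability T R).

Lemma emax_le m (v : 'I_m -> R) c : (emax v <= c%:E)%E <-> forall i, v i <= c.
Proof.
rewrite /emax; split.
- by move=> h i; move: h; rewrite (bigD1 i) //= ge_max => /andP[h _]; rewrite -lee_fin.
- move=> h; elim/big_ind: _ => //.
  + exact: leNye.
  + by move=> u v' hu hv; rewrite ge_max hu hv.
  + by move=> i _; rewrite lee_fin h.
Qed.

Lemma meas_le (f : {RV P >-> R}) c : measurable [set w | f w <= c].
Proof.
rewrite (_ : [set w | f w <= c] = f @^-1` `]-oo, c]); first exact: measurable_funPTI.
by apply/seteqP; split => w /=; rewrite in_itv /=.
Qed.

Lemma meas_gt (f g : {RV P >-> R}) e : measurable [set w | e < `|f w - g w|].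
Proof.
have mh : measurable_fun setT (fun w => `|f w - g w|).
  apply: measurableT_comp => //; exact: measurable_funB.
rewrite (_ : [set w | e < `|f w - g w|] = setT `&` (fun w => `|f w - g w|) @^-1` `]e, +oo[).
  exact: mh.
by apply/seteqP; split => w /=; rewrite in_itv /= andbT => // -[].
Qed.

Lemma meas_emax m (Z : 'I_m -> {RV P >-> R}) c :
  measurable [set w | (emax (fun i => Z i w) <= c%:E)%E].
Proof.
rewrite (_ : [set w | _] = \bigcap_(i in [set: 'I_m]) [set w | Z i w <= c]).
  by apply: fin_bigcap_measurable => // i _; exact: meas_le.
apply/seteqP; split => w /=.
  by move/emax_le => h i _; exact: h.
by move=> h; apply/emax_le => i; exact: h.
Qed.

Lemma pE {A : set T} : measurable A -> P A = (fine (P A))%:E.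
Proof. by move=> mA; rewrite fineK // fin_num_measure. Qed.

Lemma fP01 A : measurable A -> 0 <= fine (P A) <= 1.
Proof.
move=> mA; have := probability_le1 P mA; have := measure_ge0 P A.
by move=> h0 h1; apply/andP; split; rewrite -lee_fin -(pE mA).
Qed.

Lemma fP_le A B : measurable A -> measurable B -> A `<=` B -> fine (P A) <= fine (P B).
Proof.
move=> mA mB AB; by rewrite -lee_fin -(pE mA) -(pE mB); apply: le_measure => //; rewrite inE.
Qed.

Lemma fP_sum m (A : 'I_m -> set T) : (forall i, measurable (A i)) ->
  fine (\sum_(i < m) P (A i))%E = \sum_(i < m) fine (P (A i)).
Proof.
move=> mA; rewrite (eq_bigr (fun i => (fine (P (A i)))%:E)); last by move=> i _; rewrite -pE.
by rewrite sumEFin.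
Qed.

Lemma fP_union m B C (A : 'I_m -> set T) : measurable B -> measurable C ->
  (forall i, measurable (A i)) ->
  C `<=` B `|` [set w | exists i, A i w] ->
  fine (P C) <= fine (P B) + \sum_(i < m) fine (P (A i)).
Proof.
move=> mB mC mA sub.
pose A' (k : nat) := if (insub k : option 'I_m) is Some i then A i else set0.
have A'E (i : 'I_m) : A' (val i) = A i by rewrite /A' valK.
have mA' k : measurable (A' k) by rewrite /A'; case: insub.
have mU : measurable (\big[setU/set0]_(k < m) A' k).
  by apply: bigsetU_measurable => k _.
have sub' : C `<=` B `|` \big[setU/set0]_(k < m) A' k.
  move=> w /sub [hB|[i hi]]; [by left|right].
  by rewrite -bigcup_mkord; exists (val i) => //=; rewrite A'E.
have h1 := le_measure P (mem_set mC) (mem_set (measurableU _ _ mB mU)) sub'.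
have h2 := @measureU2 _ _ _ P _ _ mB mU.
have h3 := @Boole_inequality _ _ _ P A' m (fun k _ => mA' k).
rewrite (eq_bigr (fun i : 'I_m => P (A i))) in h3; last by move=> i _; rewrite A'E.
have h := le_trans h1 (le_trans h2 (leeD2l _ h3)).
move: h; rewrite (eq_bigr (fun i => (fine (P (A i)))%:E)); last by move=> i _; rewrite -pE.
move=> h; rewrite -lee_fin EFinD -(pE mC) -(pE mB) -sumEFin; exact: h.
Qed.

End Prob.

Theorem lemma4 (R : realType) (dsp : measure_display) (T : measurableType dsp)
  (P : probability T R) (dim : nat -> nat)
  (X Y : forall n : nat, 'I_(dim n) -> {RV P >-> R})
  (a b : nat -> R) (F : R -> R)
  (hF : is_cdf F) (hFc : continuous F)
  (h1 : forall x : R, 0 < F x < 1 ->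
     (fun n => P [set w | (emax (fun i => Y n i w) <= (a n + b n * x)%:E)%E])
       @ \oo --> (F x)%:E)
  (h2 : forall x : R, 0 < F x < 1 -> forall eps : R, 0 < eps ->
     (fun n => (\sum_(i < dim n)
                  P [set w | (eps * b n < `|X n i w - Y n i w|)%R])%E)
       @ \oo --> 0%E) :
  forall x : R,
    (fun n => P [set w | (emax (fun i => X n i w) <= (a n + b n * x)%:E)%E])
      @ \oo --> (F x)%:E.
Proof.
move=> x.
pose G n x := fine (P [set w | (emax (fun i => X n i w) <= (a n + b n * x)%:E)%E]).
pose H n x := fine (P [set w | (emax (fun i => Y n i w) <= (a n + b n * x)%:E)%E]).
pose s n d := fine (\sum_(i < dim n) P [set w | (d * b n < `|X n i w - Y n i w|)%R])%E.
have sE n d : s n d = \sum_(i < dim n) fine (P [set w | (d * b n < `|X n i w - Y n i w|)%R]).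
  by rewrite /s fP_sum // => i; exact: meas_gt.
apply: cvg_EFin.
  by near=> n; rewrite fin_num_measure //; exact: meas_emax.
apply: (@main_real R F hF hFc G H s b) => //.
- by move=> n y; apply: fP01; exact: meas_emax.
- move=> n y z hyz; apply: fP_le; try exact: meas_emax.
  move=> w /= hw; apply: (le_trans hw); by rewrite lee_fin lerD2l.
- move=> n y z hyz; apply: fP_le; try exact: meas_emax.
  move=> w /= hw; apply: (le_trans hw); by rewrite lee_fin lerD2l.
- move=> n y d; rewrite sE; apply: fP_union; try exact: meas_emax.
    by move=> i; exact: meas_gt.
  move=> w /= /emax_le hw.
  have [[i hi]|hno] := pselect (exists i, d * b n < `|X n i w - Y n i w|).
    by right; exists i.
  left; apply/emax_le => i.
  have := hw i; have : ~ (d * b n < `|X n i w - Y n i w|) by move=> h; apply: hno; exists i.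
  move/negP; rewrite -leNgt ler_norml => /andP[h3 h4] h5; lra.
- move=> n y d; rewrite sE; apply: fP_union; try exact: meas_emax.
    by move=> i; exact: meas_gt.
  move=> w /= /emax_le hw.
  have [[i hi]|hno] := pselect (exists i, d * b n < `|X n i w - Y n i w|).
    by right; exists i.
  left; apply/emax_le => i.
  have := hw i; have : ~ (d * b n < `|X n i w - Y n i w|) by move=> h; apply: hno; exists i.
  move/negP; rewrite -leNgt ler_norml => /andP[h3 h4] h5; lra.
- by move=> y hy; exact: fine_cvg (h1 y hy).
- move=> d d0.
  have [x0 Fx0] := @ivt_any R F hF hFc (1/2) ltac:(lra).
  have hx0 : 0 < F x0 < 1 by rewrite Fx0; lra.
  exact: fine_cvg (h2 x0 hx0 d d0).
Unshelve. all: by end_near.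
Qed.
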